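(* Fix a directed edge set $\mathcal{E}$ and a randomized design with $0<\mathbb{E}[z_i]<1$ for all $i$. Suppose the individually weighted linear estimator $\hat{\mathrm{est}}({\bf w},{\bf v})=\sum_i(w_iz_i+v_i(1-z_i))Y_i({\bf z})$ is unbiased for $\mathrm{ATE}$ under the heterogeneous additive network effects model with edge set $\mathcal{E}$, for every choice of real parameters $\alpha,\beta,\{\gamma_{ki}\}_{(k,i)\in\mathcal{E}}$. Then necessarily $w_i=\frac{1}{n\mathbb{E}[z_i]}$ and $v_i=-\frac1{n\mathbb{E}[1-z_i]}$, i.e. $\hat{\mathrm{est}}=\frac1n\sum_i\big(\frac{z_i}{\mathbb{E}[z_i]}-\frac{1-z_i}{\mathbb{E}[1-z_i]}\big)Y_i({\bf z})$, and $z_k$ and $z_i$ are independent for every $(k,i)\in\mathcal{E}$.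
   Context: Population $[n]$; random treatment vector ${\bf z}\in\{0,1\}^n$ drawn from a randomized design. Heterogeneous additive network effects model: $Y_i({\bf z})=\alpha_i+\beta_iz_i+\sum_{k\in[n]}\gamma_{ki}z_k$ with deterministic real parameters, $\gamma_{ki}=0$ unless $(k,i)\in\mathcal{E}$, where $\mathcal{E}$ is a set of ordered pairs $(k,i)$, $k\neq i$. Average (direct) treatment effect: $\mathrm{ATE}=\frac1n\sum_i(Y_i({\bf e}_i)-Y_i({\bf 0}))=\frac1n\sum_i\beta_i$, where ${\bf e}_i$ is the $i$-th standard basis vector. Individually weighted linear estimators have deterministic weights ${\bf w},{\bf v}$ not depending on ${\bf z}$. *)

(* Defs.v *)
From HB Require Import structures.
From mathcomp Require Import all_boot all_order all_algebra.
Set Implicit Arguments. Unset Strict Implicit. Unset Printing Implicit Defensive.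
Import Order.TTheory GRing.Theory Num.Theory.
Local Open Scope ring_scope.

Definition assign (n : nat) := {ffun 'I_n -> bool}.

Definition is_design (R : realFieldType) (n : nat) (p : assign n -> R) : Prop :=
  (forall z, 0 <= p z) /\ \sum_(z : assign n) p z = 1.

Definition Ex (R : realFieldType) (n : nat) (p : assign n -> R) (f : assign n -> R) : R :=
  \sum_(z : assign n) p z * f z.

Definition zr (R : realFieldType) (n : nat) (z : assign n) (i : 'I_n) : R := (z i)%:R.

Definition Yout (R : realFieldType) (n : nat) (alpha beta : 'I_n -> R)
  (gamma : 'I_n -> 'I_n -> R) (z : assign n) (i : 'I_n) : R :=
  alpha i + beta i * zr R z i + \sum_(k < n) gamma k i * zr R z k.

Definition ATE (R : realFieldType) (n : nat) (alpha beta : 'I_n -> R)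
  (gamma : 'I_n -> 'I_n -> R) : R :=
  n%:R^-1 * \sum_(i < n)
    (Yout alpha beta gamma [ffun j => j == i] i - Yout alpha beta gamma [ffun _ => false] i).

Definition est (R : realFieldType) (n : nat) (w v : 'I_n -> R) (alpha beta : 'I_n -> R)
  (gamma : 'I_n -> 'I_n -> R) (z : assign n) : R :=
  \sum_(i < n) (w i * zr R z i + v i * (1 - zr R z i)) * Yout alpha beta gamma z i.

Definition indep2 (R : realFieldType) (n : nat) (p : assign n -> R) (k i : 'I_n) : Prop :=
  forall a b : bool,
    Ex p (fun z => ((z k == a) && (z i == b))%:R) =
    Ex p (fun z => (z k == a)%:R) * Ex p (fun z => (z i == b)%:R).

(* Main.v *)
Require Import Defs.
From HB Require Import structures.
From mathcomp Require Import all_boot all_order all_algebra.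
From mathcomp Require Import ring.
Import Order.TTheory GRing.Theory Num.Theory.
Set Implicit Arguments. Unset Strict Implicit.
Local Open Scope ring_scope.

Section H.
Variables (R : realFieldType) (n : nat) (p : assign n -> R).

Lemma Ex_ext {f g} : (forall z, f z = g z) -> Ex p f = Ex p g.
Proof. by move=> h; apply: eq_bigr => z _; rewrite h. Qed.

Lemma ExD f g : Ex p (fun z => f z + g z) = Ex p f + Ex p g.
Proof. by rewrite /Ex -big_split; apply: eq_bigr => z _; rewrite mulrDr. Qed.

Lemma ExB f g : Ex p (fun z => f z - g z) = Ex p f - Ex p g.
Proof. by rewrite /Ex -sumrB; apply: eq_bigr => z _; rewrite mulrBr. Qed.

Lemma ExZ c f : Ex p (fun z => c * f z) = c * Ex p f.
Proof. by rewrite /Ex mulr_sumr; apply: eq_bigr => z _; rewrite mulrCA. Qed.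

Lemma Ex1 : is_design p -> Ex p (fun _ => 1) = 1.
Proof. by case=> _ h; rewrite /Ex -{2}h; apply: eq_bigr => z _; rewrite mulr1. Qed.

Lemma sum_ind (f : 'I_n -> R) i0 : \sum_(j < n) f j * (j == i0)%:R = f i0.
Proof.
rewrite (bigD1 i0) //= eqxx mulr1 big1 ?addr0 // => j /negbTE ->.
by rewrite mulr0.
Qed.

Lemma sum_ind' (f : 'I_n -> R) i0 : \sum_(j < n) (j == i0)%:R * f j = f i0.
Proof. by rewrite -(sum_ind f i0); apply: eq_bigr => j _; rewrite mulrC. Qed.

Lemma natb_and (a b : bool) : (a && b)%:R = a%:R * b%:R :> R.
Proof. by case: a; case: b; rewrite ?mulr1 ?mulr0. Qed.

Lemma zr_idem (z : assign n) i : zr R z i * zr R z i = zr R z i.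
Proof. by rewrite /zr; case: (z i); rewrite ?mul1r ?mul0r. Qed.

Lemma zr_comp (z : assign n) i : zr R z i * (1 - zr R z i) = 0.
Proof. by rewrite /zr; case: (z i); rewrite ?subrr ?mulr0 ?mul0r. Qed.
End H.

Theorem theorem3 (R : realFieldType) (n : nat) (E : {set 'I_n * 'I_n})
  (p : assign n -> R) (w v : 'I_n -> R) :
  (forall k i, (k, i) \in E -> k != i) ->
  is_design p ->
  (forall i, 0 < Ex p (fun z => zr R z i) < 1) ->
  (forall (alpha beta : 'I_n -> R) (gamma : 'I_n -> 'I_n -> R),
     (forall k i, (k, i) \notin E -> gamma k i = 0) ->
     Ex p (est w v alpha beta gamma) = ATE alpha beta gamma) ->
  (forall i, w i = (n%:R * Ex p (fun z => zr R z i))^-1 /\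
             v i = - (n%:R * Ex p (fun z => 1 - zr R z i))^-1) /\
  (forall k i, (k, i) \in E -> indep2 p k i).
Proof.
move=> Eneq Hd Hpi Hunb.
have Ex1' := Ex1 Hd.
set pi := fun i => Ex p (fun z => zr R z i).
have Ecomp i : Ex p (fun z => 1 - zr R z i) = 1 - pi i by rewrite ExB Ex1'.
have Ha i0 : w i0 * pi i0 + v i0 * (1 - pi i0) = 0.
  have := Hunb (fun j => (j == i0)%:R) (fun _ => 0) (fun _ _ => 0) (fun _ _ _ => erefl).
  rewrite /ATE /Yout big1 ?mulr0; last first.
    by move=> j _; rewrite !mul0r !big1 ?addr0 ?subrr // => k _; rewrite mul0r.
  rewrite (@Ex_ext _ _ p _ (fun z => w i0 * zr R z i0 + v i0 * (1 - zr R z i0))).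
    by rewrite ExD !ExZ Ecomp.
  move=> z; rewrite /est -(sum_ind (fun j => w j * zr R z j + v j * (1 - zr R z j)) i0).
  apply: eq_bigr => j _; rewrite /Yout /=; rewrite mul0r addr0 big1 ?addr0 // => k _; by rewrite mul0r.
have Hb i0 : w i0 * pi i0 = n%:R^-1.
  have := Hunb (fun _ => 0) (fun j => (j == i0)%:R) (fun _ _ => 0) (fun _ _ _ => erefl).
  rewrite /ATE /Yout.
  rewrite (eq_bigr (fun j => (j == i0)%:R)); last first.
    move=> j _; rewrite !big1 ?addr0 ?add0r; try by move=> k _; rewrite mul0r.
    by rewrite /zr !ffunE eqxx /= mulr0 subr0 mulr1.
  have -> : \sum_(j < n) (j == i0)%:R = 1 :> R.
    by rewrite (eq_bigr (fun j => (j == i0)%:R * 1)) ?(sum_ind' (fun _ => 1)) // => j _; rewrite mulr1.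
  rewrite mulr1 => <-.
  rewrite (@Ex_ext _ _ p _ (fun z => w i0 * zr R z i0)) ?ExZ //.
  move=> z; have -> : w i0 * zr R z i0 = (w i0 * zr R z i0 + v i0 * (1 - zr R z i0)) * zr R z i0.
    by rewrite mulrDl -!mulrA zr_idem (mulrC (1 - _)) zr_comp mulr0 addr0.
  rewrite /est -(sum_ind (fun j => (w j * zr R z j + v j * (1 - zr R z j)) * zr R z j) i0).
  apply: eq_bigr => j _; rewrite /Yout /= add0r big1 ?addr0 => [|k _]; last by rewrite mul0r.
  ring.
have n0 : forall i : 'I_n, n%:R^-1 != 0 :> R.
  move=> i; rewrite invr_eq0 pnatr_eq0 -lt0n.
  exact: leq_ltn_trans (leq0n i) (ltn_ord i).
have pi0 i : pi i != 0 by have /andP[h _] := Hpi i; rewrite gt_eqF.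
have pi1 i : 1 - pi i != 0 by have /andP[_ h] := Hpi i; rewrite subr_eq0 gt_eqF.
have Hv i : v i * (1 - pi i) = - n%:R^-1.
  by apply/eqP; rewrite -subr_eq0 opprK -(Hb i) addrC Ha.
have Hw : forall i, w i = (n%:R * pi i)^-1 /\ v i = - (n%:R * Ex p (fun z => 1 - zr R z i))^-1.
  move=> i; rewrite Ecomp; split.
    by apply: (mulIf (pi0 i)); rewrite Hb invfM -mulrA mulVf // mulr1.
  by apply: (mulIf (pi1 i)); rewrite Hv invfM mulNr -mulrA mulVf // mulr1.
split=> // k0 i0 kiE.
have Hg : w i0 * Ex p (fun z => zr R z i0 * zr R z k0) +
          v i0 * (pi k0 - Ex p (fun z => zr R z i0 * zr R z k0)) = 0.
  have := Hunb (fun _ => 0) (fun _ => 0) (fun k i => ((k == k0) && (i == i0))%:R).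
  have -> : ATE (fun=> 0) (fun=> 0) (fun k i => ((k == k0) && (i == i0))%:R) = 0 :> R.
    rewrite /ATE /Yout big1 ?mulr0 // => j _.
    rewrite !add0r !mul0r !add0r -sumrB big1 // => k _.
    rewrite /zr !ffunE /= mulr0 subr0.
    case: (eqVneq k k0) => [->|]; last by rewrite /= mul0r.
    case: (eqVneq j i0) => [->|]; last by rewrite andbF mul0r.
    by rewrite (negbTE (Eneq _ _ kiE)) mulr0.
  move=> H; rewrite -H; last first.
    move=> k i kiN; case: (eqVneq k k0) => [ek|]; last by [].
    case: (eqVneq i i0) => [ei|]; last by [].
    by move: kiN; rewrite ek ei kiE.
  rewrite -ExZ -ExB -ExZ -ExD.
  apply: Ex_ext => z; rewrite /est.
  transitivity ((w i0 * zr R z i0 + v i0 * (1 - zr R z i0)) * zr R z k0); first ring.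
  rewrite -(sum_ind (fun j => (w j * zr R z j + v j * (1 - zr R z j)) * zr R z k0) i0).
  apply: eq_bigr => j _; rewrite /Yout /= !mul0r !add0r.
  rewrite (eq_bigr (fun k => (j == i0)%:R * ((k == k0)%:R * zr R z k))); last first.
    by move=> k _; rewrite natb_and -mulrA mulrCA.
  rewrite -mulr_sumr (sum_ind' (fun k => zr R z k)).
  ring.
set a := Ex p (fun z => zr R z i0 * zr R z k0) in Hg.
have Ha' : a = pi i0 * pi k0.
  have : n%:R^-1 * (a - pi i0 * pi k0) = 0.
    have -> : n%:R^-1 * (a - pi i0 * pi k0) =
      ((1 - pi i0) * pi i0) * (w i0 * a + v i0 * (pi k0 - a)).
      rewrite -[n%:R^-1](Hb i0).
      have e : - (w i0 * pi i0) = v i0 * (1 - pi i0) by rewrite Hb Hv.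
      have : (1 - pi i0) * pi i0 * (w i0 * a + v i0 * (pi k0 - a)) =
         (w i0 * pi i0) * ((1 - pi i0) * a) + (v i0 * (1 - pi i0)) * (pi i0 * (pi k0 - a)) by ring.
      move=> ->; rewrite -e; ring.
    by rewrite Hg mulr0.
  by move/eqP; rewrite mulf_eq0 (negbTE (n0 i0)) /= subr_eq0 => /eqP.
move=> x y.
have ind (b : bool) i (z : assign n) : (z i == b)%:R = if b then zr R z i else 1 - zr R z i.
  by rewrite /zr; case: b; case: (z i); rewrite ?subrr ?subr0.
rewrite (@Ex_ext _ _ p _ (fun z => (if x then zr R z k0 else 1 - zr R z k0) *
                                (if y then zr R z i0 else 1 - zr R z i0))); last first.
  by move=> z; rewrite natb_and -!ind.
rewrite (@Ex_ext _ _ p (fun z => (z k0 == x)%:R) (fun z => if x then zr R z k0 else 1 - zr R z k0)); last by move=> z; rewrite ind.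
rewrite (@Ex_ext _ _ p (fun z => (z i0 == y)%:R) (fun z => if y then zr R z i0 else 1 - zr R z i0)); last by move=> z; rewrite ind.
have Ea : Ex p (fun z => zr R z k0 * zr R z i0) = a.
  by apply: Ex_ext => z; rewrite mulrC.
case: x; case: y => /=.
- by rewrite Ea Ha' mulrC.
- rewrite (@Ex_ext _ _ p _ (fun z => zr R z k0 - zr R z k0 * zr R z i0)); last by move=> z; ring.
  rewrite !Ecomp ExB Ea Ha' /pi; ring.
- rewrite (@Ex_ext _ _ p _ (fun z => zr R z i0 - zr R z k0 * zr R z i0)); last by move=> z; ring.
  rewrite !Ecomp ExB Ea Ha' /pi; ring.
- rewrite (@Ex_ext _ _ p _ (fun z => (1 - zr R z k0 - zr R z i0) + zr R z k0 * zr R z i0)); last by move=> z; ring.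
  rewrite !Ecomp ExD !ExB Ex1' Ea Ha' /pi; ring.
Qed.
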